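(* Let $\mathfrak g$ be a Lie algebra, $(\mathfrak k,\pi)$ a $\mathfrak g$-Lie algebra (write $\xi\cdot x=\pi(\xi)x$), $r_\pm:\mathfrak k\to\mathfrak g$ linear maps, $\lambda,\nu,\kappa,\mu\in\mathbb R$, and put $r=(r_++r_-)/2$, $\beta=(r_+-r_-)/2$. (i) If $r$ is an extended $\mathcal O$-operator of weight $\lambda$ with extension $\beta$ of mass $(\nu,\kappa,\mu)$ with $\nu\neq0$, then $[x,y]_R:=r_+(x)\cdot y-r_-(y)\cdot x+\lambda[x,y]_{\mathfrak k}$ defines a Lie bracket on $\mathfrak k$. (ii) Suppose $\beta(\xi\cdot x)=[\xi,\beta(x)]_{\mathfrak g}$ for all $\xi\in\mathfrak g$, $x\in\mathfrak k$, and set $[x,y]'_R:=r(x)\cdot y-r(y)\cdot x+\lambda[x,y]_{\mathfrak k}$. Then, for each choice of sign, $r$ and $\beta$ satisfy $[r(x),r(y)]_{\mathfrak g}-r(r(x)\cdot y-r(y)\cdot x+\lambda[x,y]_{\mathfrak k})=-[\beta(x),\beta(y)]_{\mathfrak g}\pm\lambda\beta([x,y]_{\mathfrak k})$ for all $x,y$ if and only if $[r_\pm(x),r_\pm(y)]_{\mathfrak g}=r_\pm([x,y]'_R)$ for all $x,y\in\mathfrak k$.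
   Context: All spaces are finite-dimensional real. For a Lie algebra $\mathfrak g$, a $\mathfrak g$-Lie algebra $(\mathfrak k,\pi)$ is a Lie algebra $(\mathfrak k,[\,,\,]_{\mathfrak k})$ with a Lie algebra homomorphism $\pi:\mathfrak g\to\mathrm{Der}(\mathfrak k)$. For constants $\nu,\kappa,\mu$, a linear map $\beta:\mathfrak k\to\mathfrak g$ is: antisymmetric of mass $\nu$ if $\nu(\beta(x)\cdot y+\beta(y)\cdot x)=0$ for all $x,y\in\mathfrak k$; $\mathfrak g$-invariant of mass $\kappa$ if $\kappa\beta(\xi\cdot x)=\kappa[\xi,\beta(x)]_{\mathfrak g}$ for all $\xi\in\mathfrak g,x\in\mathfrak k$; equivalent of mass $\mu$ if $\mu\beta([x,y]_{\mathfrak k})\cdot z=\mu[\beta(x)\cdot y,z]_{\mathfrak k}$ for all $x,y,z\in\mathfrak k$. If $\beta$ has these three properties, a linear map $r:\mathfrak k\to\mathfrak g$ is an extended $\mathcal O$-operator of weight $\lambda$ with extension $\beta$ of mass $(\nu,\kappa,\mu)$ if $[r(x),r(y)]_{\mathfrak g}-r(r(x)\cdot y-r(y)\cdot x+\lambda[x,y]_{\mathfrak k})=\kappa[\beta(x),\beta(y)]_{\mathfrak g}+\mu\beta([x,y]_{\mathfrak k})$ for all $x,y\in\mathfrak k$. *)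

(* Defs.v *)
From HB Require Import structures.
From mathcomp Require Import all_boot all_order all_algebra.
Set Implicit Arguments. Unset Strict Implicit. Unset Printing Implicit Defensive.
Import Order.TTheory GRing.Theory Num.Theory.
Local Open Scope ring_scope.

Section Lie.
Variable R : realFieldType.

Definition is_lie_bracket (V : vectType R) (br : V -> V -> V) : Prop :=
  [/\ (forall (a : R) (x y z : V), br (a *: x + y) z = a *: br x z + br y z),
      (forall (a : R) (x y z : V), br z (a *: x + y) = a *: br z x + br z y),
      (forall x : V, br x x = 0) &
      (forall x y z : V, br x (br y z) + br y (br z x) + br z (br x y) = 0)].

(* (k, brk, pi) is a g-Lie algebra: pi : g -> Der(k) is a Lie algebra
   homomorphism, where Der(k) carries the commutator bracket. *)
Definition is_g_lie_algebra (g k : vectType R) (brg : g -> g -> g)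
  (brk : k -> k -> k) (pi : g -> k -> k) : Prop :=
  [/\ is_lie_bracket brk,
      (forall (a : R) (xi eta : g) (x : k),
          pi (a *: xi + eta) x = a *: pi xi x + pi eta x),
      (forall (a : R) (xi : g) (x y : k),
          pi xi (a *: x + y) = a *: pi xi x + pi xi y),
      (forall (xi : g) (x y : k),
          pi xi (brk x y) = brk (pi xi x) y + brk x (pi xi y)) &
      (forall (xi eta : g) (x : k),
          pi (brg xi eta) x = pi xi (pi eta x) - pi eta (pi xi x))].

Variables (g k : vectType R) (brg : g -> g -> g) (brk : k -> k -> k)
  (pi : g -> k -> k).

Definition antisym_mass (nu : R) (beta : k -> g) : Prop :=
  forall x y : k, nu *: (pi (beta x) y + pi (beta y) x) = 0.

Definition invariant_mass (kappa : R) (beta : k -> g) : Prop :=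
  forall (xi : g) (x : k), kappa *: beta (pi xi x) = kappa *: brg xi (beta x).

Definition equivalent_mass (mu : R) (beta : k -> g) : Prop :=
  forall x y z : k,
    mu *: pi (beta (brk x y)) z = mu *: brk (pi (beta x) y) z.

Definition ext_O_operator (lambda nu kappa mu : R) (r beta : k -> g) : Prop :=
  [/\ antisym_mass nu beta, invariant_mass kappa beta,
      equivalent_mass mu beta &
      forall x y : k,
        brg (r x) (r y) - r (pi (r x) y - pi (r y) x + lambda *: brk x y)
        = kappa *: brg (beta x) (beta y) + mu *: beta (brk x y)].

End Lie.

(* Main.v *)
Require Import Defs.
From HB Require Import structures.
From mathcomp Require Import all_boot all_order all_algebra ssrAC.
Set Implicit Arguments. Unset Strict Implicit. Unset Printing Implicit Defensive.
Import Order.TTheory GRing.Theory Num.Theory.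
Local Open Scope ring_scope.

Section Bil.
Variables (R : realFieldType) (U V W : lmodType R) (f : U -> V -> W).
Hypothesis hl : forall (a : R) x y z, f (a *: x + y) z = a *: f x z + f y z.
Hypothesis hr : forall (a : R) x y z, f z (a *: x + y) = a *: f z x + f z y.

Lemma bl0 z : f 0 z = 0.
Proof.
have H := hl 1 0 0 z; rewrite !scale1r !addr0 in H.
by move/eqP: H; rewrite -subr_eq0 opprD addrA subrr add0r oppr_eq0 => /eqP.
Qed.
Lemma br0 z : f z 0 = 0.
Proof.
have H := hr 1 0 0 z; rewrite !scale1r !addr0 in H.
by move/eqP: H; rewrite -subr_eq0 opprD addrA subrr add0r oppr_eq0 => /eqP.
Qed.
Lemma blD x y z : f (x + y) z = f x z + f y z.
Proof. by have := hl 1 x y z; rewrite !scale1r. Qed.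
Lemma brD x y z : f z (x + y) = f z x + f z y.
Proof. by have := hr 1 x y z; rewrite !scale1r. Qed.
Lemma blZ a x z : f (a *: x) z = a *: f x z.
Proof. by have := hl a x 0 z; rewrite !addr0 bl0 addr0. Qed.
Lemma brZ a x z : f z (a *: x) = a *: f z x.
Proof. by have := hr a x 0 z; rewrite !addr0 br0 addr0. Qed.
Lemma blN x z : f (- x) z = - f x z.
Proof. by rewrite -scaleN1r blZ scaleN1r. Qed.
Lemma brN x z : f z (- x) = - f z x.
Proof. by rewrite -scaleN1r brZ scaleN1r. Qed.
Lemma blB x y z : f (x - y) z = f x z - f y z.
Proof. by rewrite blD blN. Qed.
Lemma brB x y z : f z (x - y) = f z x - f z y.
Proof. by rewrite brD brN. Qed.
End Bil.

Section Lin.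
Variables (R : realFieldType) (U V : lmodType R) (f : U -> V).
Hypothesis hf : forall (a : R) x y, f (a *: x + y) = a *: f x + f y.
Lemma l0 : f 0 = 0.
Proof.
have H := hf 1 0 0; rewrite !scale1r !addr0 in H.
by move/eqP: H; rewrite -subr_eq0 opprD addrA subrr add0r oppr_eq0 => /eqP.
Qed.
Lemma lD x y : f (x + y) = f x + f y.
Proof. by have := hf 1 x y; rewrite !scale1r. Qed.
Lemma lZ a x : f (a *: x) = a *: f x.
Proof. by have := hf a x 0; rewrite !addr0 l0 addr0. Qed.
Lemma lN x : f (- x) = - f x.
Proof. by rewrite -scaleN1r lZ scaleN1r. Qed.
Lemma lB x y : f (x - y) = f x - f y.
Proof. by rewrite lD lN. Qed.
End Lin.

Lemma antis (R : realFieldType) (V : lmodType R) (f : V -> V -> V) :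
  (forall (a : R) x y z, f (a *: x + y) z = a *: f x z + f y z) ->
  (forall (a : R) x y z, f z (a *: x + y) = a *: f z x + f z y) ->
  (forall x, f x x = 0) -> forall x y, f x y = - f y x.
Proof.
move=> hl hr ha x y; apply/eqP; rewrite -addr_eq0.
have := ha (x + y); rewrite (blD hl) !(brD hr) !ha add0r addr0.
by move=> ->.
Qed.

Lemma zU (V : zmodType) (a b c d e f : V) :
  (a - b - c + d) + (c - e - f + b) + (f - d - a + e) = 0.
Proof.
rewrite !addrA (ACl (((1*11)*(2*8))*((3*5)*(4*10))*((6*12)*(7*9)))) /=.
by rewrite !subrr ?addNr !addr0.
Qed.

Lemma zii (V : zmodType) (a c d e f L : V) :
  (a + c) + (d + e) - (f + ((c - - d) + L)) = a - f + e - L.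
Proof.
rewrite opprK !opprD !addrA.
rewrite [LHS](ACl (((1*5)*((2*6)*(3*7)))*4*8)) /=.
by rewrite !subrr !addr0.
Qed.

Section PartII.
Variables (R : realFieldType) (g k : vectType R) (brg : g -> g -> g)
  (pi : g -> k -> k) (brk : k -> k -> k) (r b : k -> g) (lam : R).
Hypothesis hgl : forall (a : R) x y z, brg (a *: x + y) z = a *: brg x z + brg y z.
Hypothesis hgr : forall (a : R) x y z, brg z (a *: x + y) = a *: brg z x + brg z y.
Hypothesis hga : forall x, brg x x = 0.
Hypothesis hr : forall (a : R) x y, r (a *: x + y) = a *: r x + r y.
Hypothesis hbl : forall (a : R) x y, b (a *: x + y) = a *: b x + b y.
Hypothesis hb : forall xi x, b (pi xi x) = brg xi (b x).

Lemma keyii x y :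
  brg (r x + b x) (r y + b y) -
    (r (pi (r x) y - pi (r y) x + lam *: brk x y) + b (pi (r x) y - pi (r y) x + lam *: brk x y))
  = brg (r x) (r y) - r (pi (r x) y - pi (r y) x + lam *: brk x y)
    + brg (b x) (b y) - lam *: b (brk x y).
Proof.
rewrite (lD hbl) (lB hbl) (lZ hbl) !hb (blD hgl) !(brD hgr).
rewrite [brg (r y) (b x)](antis hgl hgr hga).
by rewrite zii.
Qed.

Lemma partii (p : k -> g) (hp : forall z, p z = r z + b z) :
  (forall x y : k,
         brg (r x) (r y) - r (pi (r x) y - pi (r y) x + lam *: brk x y)
         = - brg (b x) (b y) + lam *: b (brk x y))
  <-> (forall x y : k, brg (p x) (p y) = p (pi (r x) y - pi (r y) x + lam *: brk x y)).
Proof.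
split=> H x y.
  rewrite !hp; apply/eqP; rewrite -subr_eq0 keyii H.
  by rewrite subr_eq0 addrAC addNr add0r.
have := H x y; rewrite !hp => /eqP; rewrite -subr_eq0 keyii => /eqP E.
apply/eqP; rewrite -subr_eq0; apply/eqP; rewrite -E.
by rewrite opprD opprK !addrA.
Qed.
End PartII.
Lemma zdec (R : comRingType) (V : lmodType R) (l kk mm : R) (t1 t2 u3 u4 v1 v2 v3 v4 w k0 m0 : V) :
  (t1 - t2 + l *: (v1 + v2)) - ((u3 - u4) - (kk *: k0 + mm *: m0)) + l *: (v3 - v4 + l *: w)
  = (t1 - t2 - u3 + u4) + l *: (v1 + v2 + v3 - v4) + (l * l) *: w + kk *: k0 + mm *: m0.
Proof.
rewrite !scalerDr !scalerN scalerA !opprD !opprK !addrA.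
by rewrite [LHS](ACl (1*2*5*6*3*4*9*10*11*7*8)).
Qed.
Lemma zsum (R : comRingType) (V : lmodType R) (l ll : R) (u1 u2 u3 v1 v2 v3 w1 w2 w3 k1 k2 k3 m1 m2 m3 : V) :
  (u1 + l *: v1 + ll *: w1 + k1 + m1) + (u2 + l *: v2 + ll *: w2 + k2 + m2) + (u3 + l *: v3 + ll *: w3 + k3 + m3)
  = (u1 + u2 + u3) + l *: (v1 + v2 + v3) + ll *: (w1 + w2 + w3) + (k1 + k2 + k3) + (m1 + m2 + m3).
Proof.
rewrite !scalerDr !addrA.
by rewrite [LHS](ACl (1*6*11*2*7*12*3*8*13*4*9*14*5*10*15)).
Qed.
Lemma zlin (R : comRingType) (V : lmodType R) (a l : R) (u v w s t q : V) :
  (a *: u + v) - (a *: w + s) + l *: (a *: t + q) = a *: (u - w + l *: t) + (v - s + l *: q).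
Proof.
rewrite !scalerDr !scalerN !scalerA mulrC !opprD !addrA.
by rewrite [LHS](ACl (1*3*5*2*4*6)).
Qed.

Section PartI.
Variables (R : realFieldType) (g k : vectType R) (brg : g -> g -> g)
  (pi : g -> k -> k) (brk : k -> k -> k) (r b : k -> g) (lam kap mu : R).
Hypothesis hgl : forall (a : R) x y z, brg (a *: x + y) z = a *: brg x z + brg y z.
Hypothesis hgr : forall (a : R) x y z, brg z (a *: x + y) = a *: brg z x + brg z y.
Hypothesis hga : forall x, brg x x = 0.
Hypothesis hkl : forall (a : R) x y z, brk (a *: x + y) z = a *: brk x z + brk y z.
Hypothesis hkr : forall (a : R) x y z, brk z (a *: x + y) = a *: brk z x + brk z y.
Hypothesis hka : forall x, brk x x = 0.
Hypothesis hkj : forall x y z, brk x (brk y z) + brk y (brk z x) + brk z (brk x y) = 0.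
Hypothesis pil : forall (a : R) xi eta x, pi (a *: xi + eta) x = a *: pi xi x + pi eta x.
Hypothesis pir : forall (a : R) xi x y, pi xi (a *: x + y) = a *: pi xi x + pi xi y.
Hypothesis pider : forall xi x y, pi xi (brk x y) = brk (pi xi x) y + brk x (pi xi y).
Hypothesis pihom : forall xi eta x, pi (brg xi eta) x = pi xi (pi eta x) - pi eta (pi xi x).
Hypothesis hr : forall (a : R) x y, r (a *: x + y) = a *: r x + r y.
Hypothesis hbl : forall (a : R) x y, b (a *: x + y) = a *: b x + b y.
Hypothesis hanti : forall x y, pi (b x) y + pi (b y) x = 0.
Hypothesis hinv : forall xi x, kap *: b (pi xi x) = kap *: brg xi (b x).
Hypothesis heq : forall x y z, mu *: pi (b (brk x y)) z = mu *: brk (pi (b x) y) z.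
Hypothesis hO : forall x y,
  brg (r x) (r y) - r (pi (r x) y - pi (r y) x + lam *: brk x y)
  = kap *: brg (b x) (b y) + mu *: b (brk x y).

Let pir2 : forall (a : R) x y xi, pi xi (a *: x + y) = a *: pi xi x + pi xi y.
Proof. by move=> a x y xi; apply: pir. Qed.

Local Notation B x y := (pi (r x) y - pi (r y) x + lam *: brk x y).

Lemma banti x y : pi (b x) y = - pi (b y) x.
Proof. by apply/eqP; rewrite -addr_eq0 hanti. Qed.

Lemma decomp x y z : B x (B y z) =
  (pi (r x) (pi (r y) z) - pi (r x) (pi (r z) y) - pi (r y) (pi (r z) x) + pi (r z) (pi (r y) x))
  + lam *: (brk (pi (r x) y) z - brk (pi (r x) z) y - brk (pi (r y) z) x + brk (pi (r z) y) x)
  + (lam * lam) *: brk x (brk y z)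
  + kap *: pi (brg (b y) (b z)) x + mu *: pi (b (brk y z)) x.
Proof.
have E : r (B y z) = brg (r y) (r z) - (kap *: brg (b y) (b z) + mu *: b (brk y z)).
  by rewrite -hO opprB [RHS]addrC subrK.
rewrite E (blB pil) (blD pil) !(blZ pil) pihom.
rewrite (brD pir2) (brB pir2) (brZ pir2) pider.
rewrite (brD hkr) (brB hkr) (brZ hkr).
rewrite zdec.
rewrite [brk y (pi (r x) z)](antis hkl hkr hka) [brk x (pi (r y) z)](antis hkl hkr hka).
rewrite [brk x (pi (r z) y)](antis hkl hkr hka) opprK.
done.
Qed.

Lemma kstep u v w : kap *: pi (b u) (pi (b v) w) = - (kap *: pi (brg (b v) (b w)) u).
Proof. by rewrite banti scalerN -(blZ pil) hinv (blZ pil). Qed.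

Lemma Ksum x y z :
  kap *: pi (brg (b y) (b z)) x + kap *: pi (brg (b z) (b x)) y + kap *: pi (brg (b x) (b y)) z = 0.
Proof.
rewrite pihom scalerBr !kstep [brg (b y) (b x)](antis hgl hgr hga) (blN pil) scalerN opprK.
by rewrite addrAC subrK addNr.
Qed.

Lemma Msum x y z :
  mu *: pi (b (brk y z)) x + mu *: pi (b (brk z x)) y + mu *: pi (b (brk x y)) z = 0.
Proof.
rewrite [mu *: pi (b (brk z x)) y]heq [mu *: pi (b (brk x y)) z]heq.
rewrite banti pider [brk y (pi (b x) z)](antis hkl hkr hka) [pi (b x) z]banti.
rewrite (blN hkl) opprK scalerN scalerDr.
by rewrite opprD addrNK addNr.
Qed.

Lemma jacB x y z : B x (B y z) + B y (B z x) + B z (B x y) = 0.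
Proof.
rewrite !decomp zsum zU zU hkj Ksum Msum !scaler0 !addr0.
done.
Qed.

Lemma lieB : is_lie_bracket (fun x y => B x y).
Proof.
split.
- move=> a x y z; rewrite (lD hr) (lZ hr) (blD pil) (blZ pil) (brD pir2) (brZ pir2).
  by rewrite (blD hkl) (blZ hkl) zlin.
- move=> a x y z; rewrite (lD hr) (lZ hr) (blD pil) (blZ pil) (brD pir2) (brZ pir2).
  by rewrite (brD hkr) (brZ hkr) zlin.
- by move=> x; rewrite subrr hka scaler0 addr0.
- exact: jacB.
Qed.
End PartI.

Lemma zlin2 (R : comRingType) (V : lmodType R) (c a : R) (u v w s : V) :
  c *: ((a *: u + v) + (a *: w + s)) = a *: (c *: (u + w)) + c *: (v + s).
Proof.
rewrite !scalerDr !scalerA mulrC !addrA.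
by rewrite [LHS](ACl (1*3*2*4)).
Qed.

Lemma zlin3 (R : comRingType) (V : lmodType R) (c a : R) (u v w s : V) :
  c *: ((a *: u + v) - (a *: w + s)) = a *: (c *: (u - w)) + c *: (v - s).
Proof.
rewrite !scalerDr !scalerN !scalerDr !scalerA mulrC !opprD !addrA.
by rewrite [LHS](ACl (1*3*2*4)).
Qed.

Lemma half1 (R : realFieldType) (V : lmodType R) (p m : V) :
  p = 2^-1 *: (p + m) + 2^-1 *: (p - m).
Proof.
rewrite -scalerDr addrACA subrr addr0 -mulr2n -scaler_nat scalerA mulVf ?scale1r //.
by rewrite pnatr_eq0.
Qed.

Lemma half2 (R : realFieldType) (V : lmodType R) (p m : V) :
  m = 2^-1 *: (p + m) - 2^-1 *: (p - m).
Proof.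
rewrite -scalerBr opprB addrC addrA subrK -mulr2n -scaler_nat scalerA mulVf ?scale1r //.
by rewrite pnatr_eq0.
Qed.

From Stdlib Require Import FunctionalExtensionality.

Theorem theorem2p13 (R : realFieldType) (g k : vectType R)
  (brg : g -> g -> g) (brk : k -> k -> k) (pi : g -> k -> k)
  (rp rm : {linear k -> g}) :
  is_lie_bracket brg -> is_g_lie_algebra brg brk pi ->
  let r := fun x : k => 2^-1 *: (rp x + rm x) in
  let beta := fun x : k => 2^-1 *: (rp x - rm x) in
  (* (i) *)
  (forall lambda nu kappa mu : R, nu != 0 ->
     ext_O_operator brg brk pi lambda nu kappa mu r beta ->
     is_lie_bracket (fun x y : k => pi (rp x) y - pi (rm y) x + lambda *: brk x y))
  /\
  (* (ii) *)
  (forall lambda : R,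
     (forall (xi : g) (x : k), beta (pi xi x) = brg xi (beta x)) ->
     let brR' := fun x y : k => pi (r x) y - pi (r y) x + lambda *: brk x y in
     ((forall x y : k,
         brg (r x) (r y) - r (pi (r x) y - pi (r y) x + lambda *: brk x y)
         = - brg (beta x) (beta y) + lambda *: beta (brk x y))
      <-> (forall x y : k, brg (rp x) (rp y) = rp (brR' x y)))
     /\
     ((forall x y : k,
         brg (r x) (r y) - r (pi (r x) y - pi (r y) x + lambda *: brk x y)
         = - brg (beta x) (beta y) - lambda *: beta (brk x y))
      <-> (forall x y : k, brg (rm x) (rm y) = rm (brR' x y)))).
Proof.
move=> [hgl hgr hga hgj] [[hkl hkr hka hkj] pil pir pider pihom] r beta.
have hr : forall (a : R) x y, r (a *: x + y) = a *: r x + r y.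
  by move=> a x y; rewrite /r (linearP rp) (linearP rm) zlin2.
have hbl : forall (a : R) x y, beta (a *: x + y) = a *: beta x + beta y.
  by move=> a x y; rewrite /beta (linearP rp) (linearP rm) zlin3.
have rpE : forall z, rp z = r z + beta z by move=> z; rewrite /r /beta -half1.
have rmE : forall z, rm z = r z - beta z by move=> z; rewrite /r /beta -half2.
split.
  move=> lam nu kap mu hnu [Han Hinv Heq HO].
  have hanti : forall x y, pi (beta x) y + pi (beta y) x = 0.
    move=> x y; have /eqP := Han x y.
    by rewrite scaler_eq0 (negbTE hnu) /= => /eqP.
  have -> : (fun x y : k => pi (rp x) y - pi (rm y) x + lam *: brk x y)
          = (fun x y : k => pi (r x) y - pi (r y) x + lam *: brk x y).
    apply: functional_extensionality => x; apply: functional_extensionality => y.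
    rewrite rpE rmE (blD pil) (blB pil) opprB.
    congr (_ + _).
    by rewrite -addrA [pi (beta x) y + _]addrA hanti add0r.
  exact: lieB.
move=> lam hb brR'; split.
  by apply: (partii brk lam hgl hgr hga hbl hb rpE).
have hbl' : forall (a : R) x y, (fun z => - beta z) (a *: x + y) = a *: (- beta x) + (- beta y).
  by move=> a x y /=; rewrite hbl opprD scalerN.
have hb' : forall xi x, (fun z => - beta z) (pi xi x) = brg xi (- beta x).
  by move=> xi x /=; rewrite hb (brN hgr).
have rmE' : forall z, rm z = r z + (fun z => - beta z) z by [].
have := partii brk lam hgl hgr hga hbl' hb' rmE'.
apply: iff_trans; split=> H x y; rewrite H /= (blN hgl) (brN hgr) opprK scalerN //.
Qed.
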